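(* There exists a centred weakly stationary sequence $X_1,X_2,\ldots$ with finite second moments such that $\operatorname{Var}(S_{2^r})/2^r$ converges (to a limit in $(0,\infty)$) as $r\to\infty$, but $\operatorname{Var}(S_n)/n$ does not converge as $n\to\infty$.
   Context: $S_n=X_1+\cdots+X_n$. *)

(* Defs.v *)
(* No measure theory is installed, so a
   probability space is encoded as a Daniell(-Stone) probability integral:
   a Stone vector lattice of functions with a positive, normalised linear
   functional E that is continuous along decreasing sequences.  By the
   Daniell-Stone theorem this is exactly an (integral w.r.t. a)
   probability measure on Omega. *)
From Stdlib Require Import Reals.
Open Scope R_scope.

Record ProbSpace := {
  Omega : Type;
  Lint : (Omega -> R) -> Prop;
  E : (Omega -> R) -> R;                (* expectation (meaningful on Lint) *)
  Lint_const : forall c : R, Lint (fun _ => c);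
  Lint_add : forall f g, Lint f -> Lint g -> Lint (fun w => f w + g w);
  Lint_scal : forall c f, Lint f -> Lint (fun w => c * f w);
  Lint_abs : forall f, Lint f -> Lint (fun w => Rabs (f w));
  Lint_min1 : forall f, Lint f -> Lint (fun w => Rmin (f w) 1);
  E_add : forall f g, Lint f -> Lint g -> E (fun w => f w + g w) = E f + E g;
  E_scal : forall c f, Lint f -> E (fun w => c * f w) = c * E f;
  E_pos : forall f, Lint f -> (forall w, 0 <= f w) -> 0 <= E f;
  E_one : E (fun _ => 1) = 1;
  E_daniell : forall fn : nat -> Omega -> R,
      (forall n, Lint (fn n)) ->
      (forall n w, fn (S n) w <= fn n w) ->
      (forall w, Un_cv (fun n => fn n w) 0) ->
      Un_cv (fun n => E (fn n)) 0
}.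

(* X n is the random variable X_{n+1} of the paper. *)
Definition second_moments (P : ProbSpace) (X : nat -> Omega P -> R) : Prop :=
  forall i j, Lint P (X i) /\ Lint P (fun w => X i w * X j w).

Definition centred (P : ProbSpace) (X : nat -> Omega P -> R) : Prop :=
  forall i, E P (X i) = 0.

Definition Cov (P : ProbSpace) (f g : Omega P -> R) : R :=
  E P (fun w => f w * g w) - E P f * E P g.

Definition Var (P : ProbSpace) (f : Omega P -> R) : R := Cov P f f.

Definition weakly_stationary (P : ProbSpace) (X : nat -> Omega P -> R) : Prop :=
  (forall i, E P (X i) = E P (X 0%nat)) /\
  (forall i j k, Cov P (X (i + k)%nat) (X (j + k)%nat) = Cov P (X i) (X j)).

(* partial sums: Ssum X n = X_1 + ... + X_n *)
Fixpoint Ssum {O : Type} (X : nat -> O -> R) (n : nat) : O -> R :=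
  match n with
  | O => fun _ => 0
  | S m => fun w => Ssum X m w + X m w
  end.

(* Main.v *)
Require Import Defs.
From Coquelicot Require Import Coquelicot.
From Stdlib Require Import Reals Lra Lia.
Import Defs.
Open Scope R_scope.


Fixpoint rsum (f : nat -> R) (n : nat) : R :=
  match n with O => 0 | S m => rsum f m + f m end.

Lemma rsum_ext f g n : (forall i, (i < n)%nat -> f i = g i) -> rsum f n = rsum g n.
Proof. induction n; simpl; intros H; auto. rewrite IHn by (intros; apply H; lia). rewrite H by lia. reflexivity. Qed.

Lemma rsum_plus f g n : rsum (fun i => f i + g i) n = rsum f n + rsum g n.
Proof. induction n; simpl; [lra|]. rewrite IHn; lra. Qed.

Lemma rsum_scal c f n : rsum (fun i => c * f i) n = c * rsum f n.
Proof. induction n; simpl; [lra|]. rewrite IHn; lra. Qed.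

Lemma rsum_const c n : rsum (fun _ => c) n = INR n * c.
Proof. induction n; simpl rsum; [simpl; lra|]. rewrite IHn, S_INR; lra. Qed.

Lemma rsum_le f g n : (forall i, f i <= g i) -> rsum f n <= rsum g n.
Proof. intros H; induction n; simpl; [lra|]. specialize (H n). lra. Qed.

Lemma rsum_Sl f n : rsum f (S n) = f O + rsum (fun i => f (S i)) n.
Proof. induction n; simpl in *; [lra|]. rewrite IHn; lra. Qed.

Lemma rsum_split f a b : rsum f (a + b) = rsum f a + rsum (fun i => f (a + i)%nat) b.
Proof. induction b; simpl; [rewrite Nat.add_0_r; lra|]. rewrite Nat.add_succ_r; simpl. rewrite IHb; lra. Qed.

Lemma rsum_swap (F : nat -> nat -> R) n m :
  rsum (fun u => rsum (fun i => F u i) n) m = rsum (fun i => rsum (fun u => F u i) m) n.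
Proof. induction n; simpl. - rewrite rsum_const; simpl; lra.
  - rewrite rsum_plus, IHn; reflexivity. Qed.

Lemma rsum_shift (g : nat -> R) P k : (forall u, g (u + P)%nat = g u) ->
  rsum (fun u => g (u + k)%nat) P = rsum g P.
Proof. intros Hg; induction k.
  - apply rsum_ext; intros; rewrite Nat.add_0_r; reflexivity.
  - rewrite <- IHk.
    assert (E1 := rsum_Sl (fun u => g (u + k)%nat) P). simpl rsum in E1.
    transitivity (rsum (fun i => g (S i + k)%nat) P).
    + apply rsum_ext; intros; f_equal; lia.
    + assert (g (P + k)%nat = g (0 + k)%nat) by (rewrite <- (Hg (0+k)%nat); f_equal; lia). simpl in *. lra.
Qed.

Definition sq (h v : nat) : R := if Nat.ltb (v mod (2*h)) h then 1 else -1.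

Lemma sq_lo h v : (v < h)%nat -> sq h v = 1.
Proof. intros; unfold sq. rewrite Nat.mod_small by lia. destruct (Nat.ltb_spec v h); [auto|lia]. Qed.
Lemma sq_hi h v : (h <= v < 2*h)%nat -> sq h v = -1.
Proof. intros; unfold sq. rewrite Nat.mod_small by lia. destruct (Nat.ltb_spec v h); [lia|auto]. Qed.
Lemma sq_per h v : sq h (v + 2*h) = sq h v.
Proof. unfold sq. replace (v + 2*h)%nat with (v + 1*(2*h))%nat by lia.
  rewrite Nat.Div0.mod_add. reflexivity. Qed.
Lemma sq_sq h v : sq h v * sq h v = 1.
Proof. unfold sq; destruct Nat.ltb; lra. Qed.

Lemma rsum_cst f n c : (forall i, (i < n)%nat -> f i = c) -> rsum f n = INR n * c.
Proof. intros H; rewrite (rsum_ext f (fun _ => c)) by auto; apply rsum_const. Qed.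

Lemma sq_sum0 h : rsum (sq h) (2*h) = 0.
Proof.
  replace (2*h)%nat with (h + h)%nat by lia. rewrite rsum_split.
  rewrite (rsum_cst _ h 1) by (intros; apply sq_lo; lia).
  rewrite (rsum_cst _ h (-1)) by (intros; apply sq_hi; lia). lra.
Qed.

Lemma sq_corr h k : (k <= h)%nat ->
  rsum (fun u => sq h u * sq h (u + k)) (2*h) = 2*INR h - 4*INR k.
Proof.
  intros Hk.
  replace (2*h)%nat with ((h-k) + (k + ((h-k) + k)))%nat by lia.
  rewrite !rsum_split.
  rewrite (rsum_cst _ (h-k) 1) by (intros; rewrite sq_lo, sq_lo by lia; lra).
  rewrite (rsum_cst _ k (-1)) by (intros; rewrite sq_lo, sq_hi by lia; lra).
  rewrite (rsum_cst _ (h-k) 1) by (intros; rewrite sq_hi, sq_hi by lia; lra).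
  rewrite (rsum_cst _ k (-1)).
  2:{ intros. rewrite sq_hi by lia.
      replace (h - k + (k + (h - k + i)) + k)%nat with (i + 2*h)%nat by lia.
      rewrite sq_per, sq_lo by lia. lra. }
  rewrite minus_INR by lia. lra.
Qed.

Definition Dsum (h n u : nat) : R := rsum (fun i => sq h (u + i)) n.
Definition Tsum (h n : nat) : R := rsum (fun u => Dsum h n u * Dsum h n u) (2*h).

Lemma D_per h n u : Dsum h n (u + 2*h) = Dsum h n u.
Proof. unfold Dsum; apply rsum_ext; intros. rewrite <- (sq_per h (u+i)). f_equal; lia. Qed.

Lemma D_S h n u : Dsum h (S n) u = sq h u + Dsum h n (S u).
Proof. unfold Dsum. rewrite rsum_Sl. rewrite Nat.add_0_r. f_equal.
  apply rsum_ext; intros; f_equal; lia. Qed.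

Lemma rsum_lin h n : rsum (fun i => 2 * INR h - 4 * INR (S i)) n
   = 2 * INR h * INR n - 2 * INR n * (INR n + 1).
Proof. induction n. simpl; lra. cbn [rsum]. rewrite IHn, !S_INR; lra. Qed.

Lemma T_S h n : (n < h)%nat ->
  Tsum h (S n) = Tsum h n + 2*(2*INR h*INR n - 2*INR n*(INR n+1)) + 2*INR h.
Proof.
  intros Hn. unfold Tsum.
  rewrite (rsum_ext _ (fun u => sq h u * sq h u + (2 * (sq h u * Dsum h n (S u))
      + Dsum h n (u+1)%nat * Dsum h n (u+1)%nat))).
  2:{ intros; rewrite D_S, Nat.add_1_r; ring. }
  rewrite !rsum_plus, rsum_scal.
  rewrite (rsum_cst _ _ 1) by (intros; apply sq_sq).
  rewrite (rsum_shift (fun u => Dsum h n u * Dsum h n u)) by (intros; rewrite D_per; reflexivity).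
  assert (rsum (fun u => sq h u * Dsum h n (S u)) (2*h)
           = rsum (fun i => 2 * INR h - 4 * INR (S i)) n) as ->.
  { unfold Dsum.
    rewrite (rsum_ext _ (fun u => rsum (fun i => sq h u * sq h (u + S i)) n)).
    2:{ intros. rewrite <- rsum_scal. apply rsum_ext; intros; do 2 f_equal; lia. }
    rewrite rsum_swap. apply rsum_ext; intros. apply sq_corr. lia. }
  rewrite rsum_lin, mult_INR. simpl (INR 2). lra.
Qed.

Lemma T_formula h n : (n <= h)%nat ->
  Tsum h n = 2*INR h*INR n^2 - 4*INR n*(INR n^2 - 1)/3.
Proof.
  induction n; intros Hn.
  - unfold Tsum, Dsum; simpl. rewrite rsum_const. lra.
  - rewrite T_S by lia. rewrite IHn by lia. rewrite S_INR. field.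
Qed.

Lemma D_add_per h n u : Dsum h (n + 2*h) u = Dsum h n u.
Proof.
  unfold Dsum. rewrite rsum_split.
  rewrite (rsum_ext (fun i => sq h (u + (n + i))) (fun i => sq h (i + (u + n)))) by (intros; f_equal; lia).
  rewrite rsum_shift by (intros; apply sq_per). rewrite sq_sum0. lra.
Qed.

Lemma T_per h n m : Tsum h (n + m*(2*h)) = Tsum h n.
Proof.
  induction m. - rewrite Nat.mul_0_l, Nat.add_0_r; reflexivity.
  - rewrite <- IHm. unfold Tsum. apply rsum_ext; intros.
    replace (n + S m * (2*h))%nat with ((n + m*(2*h)) + 2*h)%nat by lia.
    rewrite D_add_per. reflexivity.
Qed.

Lemma D_refl h n u : (n <= 2*h)%nat -> Dsum h n (u + (2*h - n)) = - Dsum h (2*h - n) u.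
Proof.
  intros Hn.
  assert (H0 : Dsum h (2*h) u = 0).
  { unfold Dsum. rewrite (rsum_ext _ (fun i => sq h (i + u))) by (intros; f_equal; lia).
    rewrite rsum_shift by (intros; apply sq_per). apply sq_sum0. }
  unfold Dsum in H0. replace (2*h)%nat with ((2*h - n) + n)%nat in H0 by lia.
  rewrite rsum_split in H0. unfold Dsum.
  rewrite (rsum_ext (fun i => sq h (u + (2 * h - n) + i)) (fun i => sq h (u + (2 * h - n + i))))
    by (intros; f_equal; lia). lra.
Qed.

Lemma T_refl h n : (n <= 2*h)%nat -> Tsum h n = Tsum h (2*h - n).
Proof.
  intros Hn. unfold Tsum.
  rewrite <- (rsum_shift (fun u => Dsum h n u * Dsum h n u) (2*h) (2*h - n))
    by (intros; rewrite D_per; reflexivity).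
  apply rsum_ext; intros. rewrite D_refl by lia. ring.
Qed.

Definition per (j : nat) : nat := (2 * 2^j)%nat.
Definition wt (j : nat) : R := (/2)^(S j).
Definition Om : Type := (nat * nat)%type.
Definition avg (j : nat) (f : Om -> R) : R := rsum (fun u => f (j,u)) (per j) / INR (per j).
Definition Ex (f : Om -> R) : R := Series (fun j => wt j * avg j f).
Definition Lb (f : Om -> R) : Prop := exists M, forall w, Rabs (f w) <= M.

Lemma per_pos j : 0 < INR (per j).
Proof. apply lt_0_INR. unfold per. pose proof (Nat.pow_nonzero 2 j). lia. Qed.

Lemma wt_pos j : 0 < wt j.
Proof. unfold wt. apply pow_lt. lra. Qed.

Lemma avg_plus j f g : avg j (fun w => f w + g w) = avg j f + avg j g.
Proof. unfold avg. rewrite rsum_plus. field. apply Rgt_not_eq, per_pos. Qed.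
Lemma avg_scal j c f : avg j (fun w => c * f w) = c * avg j f.
Proof. unfold avg. rewrite rsum_scal. field. apply Rgt_not_eq, per_pos. Qed.
Lemma avg_const j c : avg j (fun _ => c) = c.
Proof. unfold avg. rewrite rsum_const. field. apply Rgt_not_eq, per_pos. Qed.
Lemma avg_le j f g : (forall w, f w <= g w) -> avg j f <= avg j g.
Proof. intros H. unfold avg. apply Rmult_le_compat_r.
  left; apply Rinv_0_lt_compat, per_pos. apply rsum_le; auto. Qed.
Lemma avg_bound j f M : (forall w, Rabs (f w) <= M) -> Rabs (avg j f) <= M.
Proof. intros H. apply Rabs_le. split.
  - rewrite <- (avg_const j (-M)). apply avg_le. intros w; specialize (H w).
    apply Rabs_le_between in H; lra.
  - rewrite <- (avg_const j M). apply avg_le. intros w; specialize (H w).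
    apply Rabs_le_between in H; lra. Qed.

Lemma wt_geom j : wt j = /2 * (/2)^j.
Proof. reflexivity. Qed.

Lemma is_series_wt c : is_series (fun j => c * wt j) c.
Proof.
  assert (H := is_series_scal_l (c/2) _ _ (is_series_geom (/2) ltac:(rewrite Rabs_pos_eq; lra))).
  replace c with (scal (c/2) (/ (1 - /2))) by (unfold scal; simpl; unfold mult; simpl; field).
  eapply is_series_ext; [|exact H]. intros n. unfold scal; simpl; unfold mult; simpl.
  rewrite wt_geom. field.
Qed.

Lemma ex_wt (a : nat -> R) M : (forall j, Rabs (a j) <= M) -> ex_series (fun j => wt j * a j).
Proof.
  intros H. apply (@ex_series_le R_AbsRing R_CompleteNormedModule _ (fun j => M * wt j)).
  - intros n. change (norm (wt n * a n)) with (Rabs (wt n * a n)).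
    rewrite Rabs_mult, Rabs_pos_eq by (left; apply wt_pos). rewrite Rmult_comm.
    apply Rmult_le_compat_r; [left; apply wt_pos| auto].
  - eexists; apply is_series_wt.
Qed.

Lemma Series_zero : Series (fun _ => 0) = 0.
Proof. rewrite (Series_ext _ (fun n => 0 * (/2)^n)) by (intros; ring).
  rewrite Series_scal_l; ring. Qed.

Lemma ex_avg f : Lb f -> ex_series (fun j => wt j * avg j f).
Proof. intros [M HM]. apply (ex_wt _ M). intros; apply avg_bound; auto. Qed.

Lemma Ex_add f g : Lb f -> Lb g -> Ex (fun w => f w + g w) = Ex f + Ex g.
Proof. intros Hf Hg. unfold Ex. rewrite <- Series_plus by (apply ex_avg; auto).
  apply Series_ext; intros; rewrite avg_plus; ring. Qed.
Lemma Ex_scal c f : Ex (fun w => c * f w) = c * Ex f.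
Proof. unfold Ex. rewrite <- Series_scal_l. apply Series_ext; intros; rewrite avg_scal; ring. Qed.
Lemma Ex_pos f : Lb f -> (forall w, 0 <= f w) -> 0 <= Ex f.
Proof. intros Hf H. unfold Ex. rewrite <- Series_zero. apply Series_le; [|apply ex_avg; auto].
  intros n; split; [lra|]. apply Rmult_le_pos; [left; apply wt_pos|].
  rewrite <- (avg_const n 0). apply avg_le; auto. Qed.
Lemma Ex_one : Ex (fun _ => 1) = 1.
Proof. unfold Ex. rewrite (Series_ext _ (fun j => 1 * wt j)) by (intros; rewrite avg_const; ring).
  apply is_series_unique, is_series_wt. Qed.

Lemma Lb_const c : Lb (fun _ => c).
Proof. exists (Rabs c); intros; lra. Qed.
Lemma Lb_add f g : Lb f -> Lb g -> Lb (fun w => f w + g w).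
Proof. intros [M HM] [N HN]; exists (M+N); intros w.
  eapply Rle_trans; [apply Rabs_triang|]. specialize (HM w); specialize (HN w); lra. Qed.
Lemma Lb_scal c f : Lb f -> Lb (fun w => c * f w).
Proof. intros [M HM]; exists (Rabs c * M); intros w. rewrite Rabs_mult.
  apply Rmult_le_compat_l; [apply Rabs_pos|auto]. Qed.
Lemma Lb_abs f : Lb f -> Lb (fun w => Rabs (f w)).
Proof. intros [M HM]; exists M; intros w; rewrite Rabs_Rabsolu; auto. Qed.
Lemma Lb_min1 f : Lb f -> Lb (fun w => Rmin (f w) 1).
Proof. intros [M HM]; exists (Rabs M + 1); intros w. specialize (HM w).
  apply Rabs_le_between in HM. unfold Rmin; destruct Rle_dec; apply Rabs_le;
  split; try (apply Rabs_le_between; split); pose proof (Rle_abs M); pose proof (Rabs_pos M);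
  try lra. Qed.

Lemma cv_scal (u : nat -> R) c : Un_cv u 0 -> Un_cv (fun n => c * u n) 0.
Proof.
  intros H. replace 0 with (c * 0) by ring. apply CV_mult; auto.
  intros eps He; exists O; intros; unfold R_dist; rewrite Rminus_diag, Rabs_R0; lra.
Qed.

Lemma rsum_cv (g : nat -> nat -> R) K : (forall i, (i < K)%nat -> Un_cv (fun n => g n i) 0) ->
  Un_cv (fun n => rsum (g n) K) 0.
Proof.
  induction K; intros H.
  - intros eps He; exists O; intros; unfold R_dist; simpl; rewrite Rminus_0_r, Rabs_R0; lra.
  - simpl. replace 0 with (0+0) by ring. apply CV_plus. apply IHK; intros; apply H; lia.
    apply H; lia.
Qed.

Lemma rsum_sum_f a m : rsum a (S m) = sum_f_R0 a m.
Proof. induction m. simpl; ring. cbn [rsum sum_f_R0] in *. rewrite <- IHm. reflexivity. Qed.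

Lemma Ex_daniell (fn : nat -> Om -> R) :
  (forall n, Lb (fn n)) -> (forall n w, fn (S n) w <= fn n w) ->
  (forall w, Un_cv (fun n => fn n w) 0) -> Un_cv (fun n => Ex (fn n)) 0.
Proof.
  intros HL Hdec Hcv.
  assert (Hd : forall n k w, fn (n + k)%nat w <= fn n w).
  { intros n k w; induction k. rewrite Nat.add_0_r; lra.
    rewrite Nat.add_succ_r. specialize (Hdec (n+k)%nat w). lra. }
  assert (Hnn : forall n w, 0 <= fn n w).
  { intros n w. destruct (Rle_lt_dec 0 (fn n w)) as [|Hlt]; auto.
    destruct (Hcv w (- fn n w)) as [N HN]; [lra|].
    specialize (HN (N + n)%nat ltac:(lia)). unfold R_dist in HN.
    rewrite Rminus_0_r in HN. rewrite Nat.add_comm in HN.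
    specialize (Hd n N w). apply Rabs_def2 in HN. lra. }
  destruct (HL O) as [M0 HM0].
  set (M := Rabs M0 + 1).
  assert (HMp : 0 < M) by (unfold M; pose proof (Rabs_pos M0); lra).
  assert (HM : forall n w, 0 <= fn n w <= M).
  { intros n w; split; auto. specialize (Hd O n w). specialize (HM0 w).
    apply Rabs_le_between in HM0. pose proof (Rle_abs M0). unfold M. simpl in Hd. lra. }
  intros eps He.
  destruct (pow_lt_1_zero (/2) ltac:(rewrite Rabs_pos_eq; lra) (eps / (2*M)))
    as [N HN].
  { apply Rdiv_lt_0_compat; lra. }
  specialize (HN N (le_n N)). rewrite Rabs_pos_eq in HN by (apply pow_le; lra).
  assert (HNM : M * (/2)^(S N) < eps/2).
  { simpl. apply (Rmult_lt_compat_l M) in HN; auto.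
    replace (M * (eps / (2*M))) with (eps/2) in HN by (field; lra).
    pose proof (pow_lt (/2) N ltac:(lra)). nra. }
  set (a := fun n j => wt j * avg j (fn n)).
  assert (Hhead : Un_cv (fun n => rsum (a n) (S N)) 0).
  { apply rsum_cv. intros j _. unfold a. apply cv_scal. unfold avg.
    assert (Un_cv (fun n => / INR (per j) * rsum (fun u => fn n (j, u)) (per j)) 0).
    { apply cv_scal. apply rsum_cv. intros; apply Hcv. }
    intros e He'. destruct (H e He') as [K HK]. exists K; intros n Hn.
    specialize (HK n Hn). unfold Rdiv. rewrite Rmult_comm. auto. }
  destruct (Hhead (eps/2) ltac:(lra)) as [N2 HN2].
  exists N2. intros n Hn. specialize (HN2 n Hn). unfold R_dist in *.
  rewrite Rminus_0_r in *.
  assert (Hpos : 0 <= Ex (fn n)) by (apply Ex_pos; auto).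
  assert (Htail : Ex (fn n) <= rsum (a n) (S N) + M * (/2)^(S N)).
  { unfold Ex. rewrite (Series_incr_n _ (S N)) by (lia || (apply ex_avg; auto)).
    simpl pred. rewrite <- rsum_sum_f. fold (a n).
    apply Rplus_le_compat_l.
    assert (Hs : is_series (fun k => M * (/2)^(S N) * wt k) (M * (/2)^(S N))) by apply is_series_wt.
    rewrite <- (is_series_unique _ _ Hs).
    apply Series_le; [|eexists; exact Hs].
    intros k; unfold a. split.
    - apply Rmult_le_pos; [left; apply wt_pos|]. rewrite <- (avg_const (S N + k) 0).
      apply avg_le; intros; apply HM.
    - replace (M * (/2)^(S N) * wt k) with (wt (S N + k) * M).
      2:{ unfold wt. replace (S (S N + k)) with (S N + S k)%nat by lia. rewrite pow_add. ring. }
      apply Rmult_le_compat_l; [left; apply wt_pos|]. rewrite <- (avg_const (S N + k) M).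
      apply avg_le; intros; apply HM. }
  apply Rabs_def2 in HN2. rewrite Rabs_pos_eq by auto. lra.
Qed.

Definition PS : ProbSpace := {|
  Omega := Om; Lint := Lb; E := Ex;
  Lint_const := Lb_const; Lint_add := Lb_add; Lint_scal := Lb_scal;
  Lint_abs := Lb_abs; Lint_min1 := Lb_min1;
  E_add := Ex_add; E_scal := fun c f _ => Ex_scal c f; E_pos := Ex_pos; E_one := Ex_one;
  E_daniell := Ex_daniell |}.

Definition X (n : nat) (w : Om) : R := sq (2^(fst w))%nat (snd w + n).

Lemma sq_abs h v : Rabs (sq h v) <= 1.
Proof. unfold sq; destruct Nat.ltb; unfold Rabs; destruct Rcase_abs; lra. Qed.

Lemma Lb_X i : Lb (X i).
Proof. exists 1; intros; apply sq_abs. Qed.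
Lemma Lb_XX i j : Lb (fun w => X i w * X j w).
Proof. exists 1; intros. rewrite Rabs_mult. pose proof (sq_abs (2^fst w) (snd w + i)).
  pose proof (sq_abs (2^fst w) (snd w + j)). unfold X.
  pose proof (Rabs_pos (sq (2 ^ fst w) (snd w + i))). nra. Qed.

Lemma Ssum_D n j u : Ssum X n (j,u) = Dsum (2^j)%nat n u.
Proof. induction n; simpl. unfold Dsum; reflexivity. rewrite IHn. unfold Dsum, X; simpl. reflexivity. Qed.

Lemma rsum_sq_shift h i : rsum (fun u => sq h (u + i)) (2*h) = 0.
Proof. rewrite (rsum_shift (sq h)) by (intros; apply sq_per). apply sq_sum0. Qed.

Lemma Ex_X i : Ex (X i) = 0.
Proof. unfold Ex. rewrite <- Series_zero. apply Series_ext; intros j.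
  unfold avg, X, per; simpl. rewrite rsum_sq_shift. lra. Qed.

Lemma Ex_S n : Ex (Ssum X n) = 0.
Proof. unfold Ex. rewrite <- Series_zero. apply Series_ext; intros j.
  unfold avg, per. rewrite (rsum_ext _ (Dsum (2^j)%nat n)) by (intros; apply Ssum_D).
  unfold Dsum. rewrite rsum_swap.
  rewrite (rsum_ext _ (fun _ => 0)) by (intros; apply rsum_sq_shift).
  rewrite rsum_const. lra. Qed.

Lemma Ex_XX_shift a b k : Ex (fun w => X (a+k) w * X (b+k) w) = Ex (fun w => X a w * X b w).
Proof. unfold Ex. apply Series_ext; intros j. f_equal. unfold avg, X, per; cbn [fst snd]. f_equal.
  rewrite <- (rsum_shift (fun u => sq (2^j) (u + a) * sq (2^j) (u + b)) _ k).
  - apply rsum_ext; intros. f_equal; f_equal; lia.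
  - intros u. replace (u + 2*2^j + a)%nat with ((u+a) + 2*2^j)%nat by lia.
    replace (u + 2*2^j + b)%nat with ((u+b) + 2*2^j)%nat by lia.
    rewrite !sq_per. reflexivity. Qed.

Lemma Var_S n : Defs.Var PS (Ssum X n) = Series (fun j => wt j * (Tsum (2^j)%nat n / INR (2 * 2^j)%nat)).
Proof. unfold Defs.Var, Defs.Cov; simpl. rewrite Ex_S. rewrite Rmult_0_l, Rminus_0_r.
  unfold Ex. apply Series_ext; intros j. f_equal. unfold avg, per, Tsum. f_equal.
  apply rsum_ext; intros. rewrite Ssum_D. reflexivity. Qed.

Lemma T0 h : Tsum h 0 = 0.
Proof. unfold Tsum, Dsum; simpl. rewrite rsum_const. lra. Qed.

Lemma T_mult h m : Tsum h (m * (2*h)) = 0.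
Proof. pose proof (T_per h 0 m) as H. rewrite Nat.add_0_l in H. rewrite H. apply T0. Qed.

Lemma geo2 A B : is_series (fun k => A * (/2)^k + B * ((/2)^k * (/2)^k)) (2*A + 4/3*B).
Proof.
  assert (H1 := is_series_scal_l A _ _ (is_series_geom (/2) ltac:(rewrite Rabs_pos_eq; lra))).
  assert (H2 := is_series_scal_l B _ _ (is_series_geom (/4) ltac:(rewrite Rabs_pos_eq; lra))).
  assert (H := is_series_plus _ _ _ _ H1 H2).
  replace (2*A + 4/3*B) with (plus (scal A (/ (1 - /2))) (scal B (/ (1 - /4)))).
  2:{ unfold plus, scal; simpl; unfold mult; simpl. field. }
  eapply is_series_ext; [|exact H]. intros n. unfold plus, scal; simpl; unfold mult; simpl.
  rewrite <- Rpow_mult_distr. replace (/2 * /2) with (/4) by field. reflexivity.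
Qed.

Lemma p2pos k : 0 < 2^k.
Proof. apply pow_lt; lra. Qed.

Lemma INR_pow2 k : INR (2^k)%nat = 2^k.
Proof. rewrite pow_INR. reflexivity. Qed.

Lemma ratio h n : (0 < h)%nat -> (n <= h)%nat ->
  Tsum h n / INR (2*h)%nat = INR n ^ 2 - 2 * INR n * (INR n ^ 2 - 1) / (3 * INR h).
Proof. intros Hh Hn. rewrite T_formula by auto. rewrite mult_INR. simpl (INR 2).
  assert (0 < INR h) by (apply lt_0_INR; auto). field. lra. Qed.

Lemma pow2_split r j : (j < r)%nat -> (2^r = 2^(r-j-1) * (2 * 2^j))%nat.
Proof. intros H. replace r with ((r-j-1) + S j)%nat at 1 by lia. rewrite Nat.pow_add_r.
  reflexivity. Qed.

Lemma pow2_nat_pos k : (0 < 2^k)%nat.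
Proof. pose proof (Nat.pow_nonzero 2 k). lia. Qed.

Lemma Var_dyadic r : Defs.Var PS (Ssum X (2^r)) =
  (/2)^(S r) * (2 * (2^r)^2 - 8/9 * ((2^r)^2 - 1)).
Proof.
  rewrite Var_S. rewrite (Series_incr_n_aux _ r).
  2:{ intros k Hk. rewrite (pow2_split r k Hk), T_mult. unfold Rdiv; ring. }
  apply is_series_unique.
  set (x := 2^r).
  set (A := (/2)^(S r) * x^2). set (B := - ((/2)^(S r) * (2/3) * (x^2 - 1))).
  replace ((/2)^(S r) * (2 * x^2 - 8/9 * (x^2 - 1))) with (2*A + 4/3*B)
    by (unfold A, B; field).
  eapply is_series_ext; [|apply geo2]. intros k. simpl.
  rewrite ratio.
  2: apply pow2_nat_pos.
  2: apply Nat.pow_le_mono_r; lia.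
  rewrite !INR_pow2. unfold wt, A, B, x. rewrite !pow_inv, !pow_add.
  pose proof (p2pos k); pose proof (p2pos r). simpl. rewrite ?pow_add. field. lra. Qed.

Definition term3 r j := wt j * (Tsum (2^j)%nat (3*2^r)%nat / INR (2*2^j)%nat).

Lemma b0 r : term3 r r = (/2)^(S r) * ((2^r)^2 - 2*((2^r)^2-1)/3).
Proof. unfold term3.
  replace (3*2^r)%nat with (2^r + 1*(2*2^r))%nat by lia. rewrite T_per.
  rewrite ratio by (auto using pow2_nat_pos).
  rewrite INR_pow2. unfold wt. pose proof (p2pos r). field. lra. Qed.

Lemma b1 r : term3 r (S r) = (/2)^(S (S r)) * ((2^r)^2 - ((2^r)^2-1)/3).
Proof. unfold term3.
  assert (E2 : (2^(S r) = 2*2^r)%nat) by reflexivity.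
  rewrite E2. rewrite T_refl by lia.
  replace (2 * (2*2^r) - 3*2^r)%nat with (2^r)%nat by lia.
  rewrite ratio by (pose proof (pow2_nat_pos r); lia).
  rewrite mult_INR, INR_pow2. simpl (INR 2). unfold wt. pose proof (p2pos r).
  rewrite !pow_inv. simpl. field. lra. Qed.

Lemma b2 r k : term3 r (r + S (S k)) =
  (/2)^(S (S (S r))) * (9*(2^r)^2) * (/2)^k
  + (- ((/2)^(S (S (S r))) * ((9*(2^r)^2 - 1)/2))) * ((/2)^k * (/2)^k).
Proof. unfold term3.
  rewrite ratio.
  2: apply pow2_nat_pos.
  2:{ rewrite Nat.pow_add_r. simpl. pose proof (pow2_nat_pos k). pose proof (pow2_nat_pos r). nia. }
  rewrite mult_INR, !INR_pow2. simpl (INR 3). unfold wt.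
  pose proof (p2pos r). pose proof (p2pos k).
  rewrite !pow_inv, !pow_add. simpl. rewrite ?pow_add. simpl. field. lra. Qed.

Definition L3 r := (/2)^(S r) * ((2^r)^2 - 2*((2^r)^2-1)/3)
  + (/2)^(S (S r)) * ((2^r)^2 - ((2^r)^2-1)/3)
  + (/2)^(S (S (S r))) * (18*(2^r)^2 - 2/3*(9*(2^r)^2-1)).

Lemma Var_triple r : Defs.Var PS (Ssum X (3*2^r)) = L3 r.
Proof.
  rewrite Var_S. rewrite (Series_incr_n_aux _ r).
  2:{ intros k Hk. replace (3*2^r)%nat with ((3*2^(r-k-1)) * (2*2^k))%nat.
      rewrite T_mult. unfold Rdiv; ring.
      rewrite (pow2_split r k Hk). ring. }
  apply is_series_unique. fold (term3 r).
  apply is_series_decr_1. apply is_series_decr_1.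
  eapply is_series_ext; [intros k; symmetry; exact (b2 r k) |].
  match goal with |- is_series _ ?V =>
    replace V with (2 * ((/2)^(S (S (S r))) * (9*(2^r)^2))
       + 4/3 * (- ((/2)^(S (S (S r))) * ((9*(2^r)^2 - 1)/2)))) end.
  { apply geo2. }
  change (wt (r + 0) * (Tsum (2 ^ (r + 0)) (3 * 2 ^ r) / INR (2 * 2 ^ (r + 0))))
    with (term3 r (r+0)).
  change (wt (r + 1) * (Tsum (2 ^ (r + 1)) (3 * 2 ^ r) / INR (2 * 2 ^ (r + 1))))
    with (term3 r (r+1)).
  rewrite Nat.add_0_r, Nat.add_1_r, b0, b1. unfold L3, plus, opp; simpl.
  field.
Qed.

Lemma triple_ge r : 11/18 <= Defs.Var PS (Ssum X (3*2^r)) / INR (3*2^r).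
Proof.
  rewrite Var_triple. rewrite mult_INR, INR_pow2. simpl (INR 3).
  pose proof (p2pos r).
  assert (L3 r / ((1+1+1) * 2^r) = 11/18 + / (6 * (2^r)^2)).
  { unfold L3. rewrite !pow_inv. simpl. field. lra. }
  rewrite H0. assert (0 < / (6 * (2^r)^2)) by (apply Rinv_0_lt_compat; nra). lra.
Qed.

Lemma dyadic_ratio r : Defs.Var PS (Ssum X (2^r)) / INR (2^r) = 5/9 + 4/(9*(2^r)^2).
Proof. rewrite Var_dyadic, INR_pow2. pose proof (p2pos r). rewrite !pow_inv. simpl. field. lra. Qed.

Theorem proposition2 :
  exists (P : ProbSpace) (X : nat -> Omega P -> R),
    centred P X /\ weakly_stationary P X /\ second_moments P X /\
    (exists l : R, 0 < l /\
       Un_cv (fun r => Var P (Ssum X (2 ^ r)) / INR (2 ^ r)) l) /\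
    ~ (exists l : R, Un_cv (fun n => Var P (Ssum X n) / INR n) l).
Proof.
  exists PS, X. split; [|split; [|split; [|split]]].
  - intros i; simpl; apply Ex_X.
  - split. + intros i; simpl; rewrite !Ex_X; reflexivity.
    + intros i j k. unfold Cov; simpl. rewrite !Ex_X, Ex_XX_shift. reflexivity.
  - intros i j; split; [apply Lb_X | apply Lb_XX].
  - exists (5/9). split; [lra|]. intros eps He.
    destruct (pow_lt_1_zero (/2) ltac:(rewrite Rabs_pos_eq; lra) (Rmin eps 1)) as [N HN].
    { apply Rmin_pos; lra. }
    exists N; intros n Hn. specialize (HN n Hn). unfold R_dist. rewrite dyadic_ratio.
    rewrite Rabs_pos_eq in HN by (apply pow_le; lra).
    pose proof (Rmin_l eps 1); pose proof (Rmin_r eps 1).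
    pose proof (p2pos n). rewrite pow_inv in HN.
    assert (Hq : 4 / (9 * (2^n)^2) <= / 2^n).
    { apply (Rmult_le_reg_r (9 * (2^n)^2)); [nra|]. unfold Rdiv.
      rewrite Rmult_assoc, Rinv_l by nra. field_simplify; try lra.
      assert (1 <= 2^n) by (apply pow_R1_Rle; lra). nra. }
    assert (0 < 4 / (9 * (2^n)^2)) by (apply Rdiv_lt_0_compat; nra).
    rewrite Rabs_pos_eq by lra. lra.
  - intros [l Hl]. destruct (Hl (1/100) ltac:(lra)) as [N HN].
    assert (HNp : (N < 2^(N+2))%nat).
    { pose proof (Nat.pow_gt_lin_r 2 (N+2) ltac:(lia)). lia. }
    pose proof (HN (2^(N+2))%nat ltac:(lia)) as H1.
    pose proof (HN (3*2^(N+2))%nat ltac:(lia)) as H2.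
    unfold R_dist in H1, H2.
    rewrite dyadic_ratio in H1. pose proof (triple_ge (N+2)).
    assert (4 <= 2^(N+2)).
    { rewrite pow_add. pose proof (pow_R1_Rle 2 N ltac:(lra)). simpl. lra. }
    assert (4/(9*(2^(N+2))^2) <= 1/36).
    { apply (Rmult_le_reg_r (9 * (2^(N+2))^2)); [nra|]. unfold Rdiv.
      rewrite Rmult_assoc, Rinv_l by nra. nra. }
    apply Rabs_def2 in H1. apply Rabs_def2 in H2. destruct H1, H2. change (Omega PS) with Om in *. lra.
Qed.
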